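(* Let $X$ be a compact Hausdorff space. Then $\mathscr{C}_{\mathrm{a.e.}}(X)$ and all its subrings are strongly localizable archimedean partially ordered commutative rings.
   Context: $\mathscr{C}_{\mathrm{a.e.}}(X)$: consider continuous real-valued functions $f$ defined on dense open subsets $\operatorname{dom}f$ of $X$; define $f+g$, $fg$ pointwise on $\operatorname{dom}f\cap\operatorname{dom}g$; $f\approx g$ iff $f|_A=g|_A$ for some dense open $A\subseteq\operatorname{dom}f\cap\operatorname{dom}g$. $\mathscr{C}_{\mathrm{a.e.}}(X)$ is the quotient commutative ring, ordered by $[f]\le[g]$ iff $f|_A\le g|_A$ pointwise for some dense open $A\subseteq\operatorname{dom}f\cap\operatorname{dom}g$. Subrings contain $1$ and carry the induced order. A partially ordered commutative ring is a commutative ring with partial order $\le$, $r\le s\Rightarrow r+t\le s+t$, positive cone $R^+$ closed under multiplication and containing all squares. $\mathbb{N}=\{1,2,\dots\}$. Archimedean: $kg+h\in R^+$ for all $k\in\mathbb{N}$ implies $g\in R^+$. $\mathrm{Loc}(R)$: the $s\in1+R^+$ with $rs\in R^+\Rightarrow r\in R^+$ for all $r$. Strongly localizable: $r^2\in R^+$ for all $r$ and $\mathrm{Loc}(R)=1+R^+$. *)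

(* Defs.v *)
From HB Require Import structures.
From mathcomp Require Import all_boot all_order all_algebra.
From mathcomp Require Import all_classical all_reals all_analysis.
Set Implicit Arguments. Unset Strict Implicit. Unset Printing Implicit Defensive.
Import Order.TTheory GRing.Theory Num.Theory.
Import numFieldNormedType.Exports.
Local Open Scope classical_set_scope.
Local Open Scope ring_scope.

Section AE.
Variables (X : topologicalType) (R : realType).

(* A representative of an element of C_ae(X): a domain dom f and a function
   (only its values on the domain matter). *)
Definition aerep := (set X * (X -> R))%type.

Definition is_ae_on (A : set X) (g : X -> R) : Prop :=
  [/\ open A, dense A & {within A, continuous g}].
Definition is_ae (f : aerep) : Prop := is_ae_on f.1 f.2.

Definition ae_zero : aerep := (setT, fun _ => 0).
Definition ae_one  : aerep := (setT, fun _ => 1).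
Definition ae_add (f g : aerep) : aerep := (f.1 `&` g.1, fun x => f.2 x + g.2 x).
Definition ae_opp (f : aerep) : aerep := (f.1, fun x => - f.2 x).
Definition ae_mul (f g : aerep) : aerep := (f.1 `&` g.1, fun x => f.2 x * g.2 x).
Definition ae_sub (f g : aerep) : aerep := ae_add f (ae_opp g).
Fixpoint ae_natmul (g : aerep) (k : nat) : aerep :=
  match k with 0%N => ae_zero | k'.+1 => ae_add (ae_natmul g k') g end.

Definition ae_eq (f g : aerep) : Prop :=
  exists A : set X, [/\ open A, dense A, A `<=` f.1 `&` g.1 &
                        forall x, A x -> f.2 x = g.2 x].
Definition ae_le (f g : aerep) : Prop :=
  exists A : set X, [/\ open A, dense A, A `<=` f.1 `&` g.1 &
                        forall x, A x -> f.2 x <= g.2 x].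

Definition ae_pos (f : aerep) : Prop := ae_le ae_zero f.

(* S (a set of representatives, closed under ≈) is a subring of C_ae(X). *)
Definition ae_saturated (S : aerep -> Prop) : Prop :=
  forall f g, S f -> is_ae g -> ae_eq f g -> S g.
Definition ae_ring_closed (S : aerep -> Prop) : Prop :=
  [/\ S ae_zero, S ae_one,
      forall f g, S f -> S g -> S (ae_add f g),
      forall f, S f -> S (ae_opp f) &
      forall f g, S f -> S g -> S (ae_mul f g)].
Definition ae_subring (S : aerep -> Prop) : Prop :=
  [/\ forall f, S f -> is_ae f, ae_saturated S & ae_ring_closed S].

Definition po_comm_ring (S : aerep -> Prop) : Prop :=
  [/\
      ae_ring_closed S,
      [/\ forall f, S f -> ae_eq f f,
          forall f g, S f -> S g -> ae_eq f g -> ae_eq g f,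
          forall f g h, S f -> S g -> S h -> ae_eq f g -> ae_eq g h -> ae_eq f h,
          forall f f' g g', S f -> S f' -> S g -> S g' -> ae_eq f f' -> ae_eq g g' ->
            ae_eq (ae_add f g) (ae_add f' g') /\ ae_eq (ae_mul f g) (ae_mul f' g') &
          forall f f', S f -> S f' -> ae_eq f f' -> ae_eq (ae_opp f) (ae_opp f')],
      [/\ [/\ forall f g h, S f -> S g -> S h ->
            ae_eq (ae_add f (ae_add g h)) (ae_add (ae_add f g) h),
          forall f g, S f -> S g -> ae_eq (ae_add f g) (ae_add g f),
          forall f, S f -> ae_eq (ae_add ae_zero f) f &
          forall f, S f -> ae_eq (ae_add (ae_opp f) f) ae_zero] &
      [/\ forall f g h, S f -> S g -> S h ->
            ae_eq (ae_mul f (ae_mul g h)) (ae_mul (ae_mul f g) h),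
          forall f g, S f -> S g -> ae_eq (ae_mul f g) (ae_mul g f),
          forall f, S f -> ae_eq (ae_mul ae_one f) f &
          forall f g h, S f -> S g -> S h ->
            ae_eq (ae_mul f (ae_add g h)) (ae_add (ae_mul f g) (ae_mul f h))]],
      [/\ forall f f' g g', S f -> S f' -> S g -> S g' -> ae_eq f f' -> ae_eq g g' ->
            ae_le f g -> ae_le f' g',
          forall f, S f -> ae_le f f,
          forall f g h, S f -> S g -> S h -> ae_le f g -> ae_le g h -> ae_le f h &
          forall f g, S f -> S g -> ae_le f g -> ae_le g f -> ae_eq f g] &
      [/\ forall r s t, S r -> S s -> S t -> ae_le r s -> ae_le (ae_add r t) (ae_add s t),
      forall r s, S r -> S s -> ae_pos r -> ae_pos s -> ae_pos (ae_mul r s) &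
      forall r, S r -> ae_pos (ae_mul r r)]].

Definition ae_archimedean (S : aerep -> Prop) : Prop :=
  forall g h, S g -> S h ->
    (forall k : nat, (1 <= k)%N -> ae_pos (ae_add (ae_natmul g k) h)) -> ae_pos g.

Definition ae_one_plus_cone (S : aerep -> Prop) (s : aerep) : Prop :=
  exists p, [/\ S p, ae_pos p & ae_eq s (ae_add ae_one p)].

Definition ae_Loc (S : aerep -> Prop) (s : aerep) : Prop :=
  [/\ S s, ae_one_plus_cone S s &
      forall r, S r -> ae_pos (ae_mul r s) -> ae_pos r].

Definition ae_strongly_localizable (S : aerep -> Prop) : Prop :=
  (forall r, S r -> ae_pos (ae_mul r r)) /\
  (forall s, S s -> (ae_Loc S s <-> ae_one_plus_cone S s)).

Definition ae_good (S : aerep -> Prop) : Prop :=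
  [/\ po_comm_ring S, ae_archimedean S & ae_strongly_localizable S].

End AE.

(* Main.v *)
From Pilot Require Import Defs.
From HB Require Import structures.
From mathcomp Require Import all_boot all_order all_algebra.
From mathcomp Require Import all_classical all_reals all_analysis.
From mathcomp Require Import lra.
Import Pilot.Defs.
Set Implicit Arguments. Unset Strict Implicit. Unset Printing Implicit Defensive.
Import Order.TTheory GRing.Theory Num.Theory.
Import numFieldNormedType.Exports.
Local Open Scope classical_set_scope.

Section Proof15.
Variables (X : topologicalType) (R : realType).
Local Open Scope ring_scope.

Definition DO (A : set X) := open A /\ dense A.

Lemma DOT : DO setT.
Proof.
split; first exact: openT.
by move=> O [x Ox] _; exists x.
Qed.

Lemma DOI A B : DO A -> DO B -> DO (A `&` B).
Proof.
move=> [oA dA] [oB dB]; split; first exact: openI.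
exact: denseI.
Qed.

Lemma is_ae_DO (f : aerep X R) : is_ae f -> DO f.1.
Proof. by case=> ? ? ?. Qed.

Lemma eqDO (f g : aerep X R) : ae_eq f g ->
  exists A, [/\ DO A, A `<=` f.1 `&` g.1 & forall x, A x -> f.2 x = g.2 x].
Proof. by case=> A [? ? ? ?]; exists A. Qed.

Lemma leDO (f g : aerep X R) : ae_le f g ->
  exists A, [/\ DO A, A `<=` f.1 `&` g.1 & forall x, A x -> f.2 x <= g.2 x].
Proof. by case=> A [? ? ? ?]; exists A. Qed.

Lemma mkeq (f g : aerep X R) A : DO A -> A `<=` f.1 `&` g.1 ->
  (forall x, A x -> f.2 x = g.2 x) -> ae_eq f g.
Proof. by move=> [? ?] ? ?; exists A. Qed.

Lemma mkle (f g : aerep X R) A : DO A -> A `<=` f.1 `&` g.1 ->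
  (forall x, A x -> f.2 x <= g.2 x) -> ae_le f g.
Proof. by move=> [? ?] ? ?; exists A. Qed.

Lemma natmulE (g : aerep X R) k x : (ae_natmul g k).2 x = g.2 x *+ k.
Proof.
elim: k => [|k IH] /=; first by rewrite mulr0n.
by rewrite IH mulrS addrC.
Qed.

Lemma cont_at (f : aerep X R) : is_ae f -> forall x, f.1 x -> f.2 @ x --> f.2 x.
Proof.
case=> oA _ c x Ax.
have := c; rewrite continuous_open_subspace //.
by move=> /(_ x); rewrite in_setE => /(_ Ax).
Qed.

Lemma is_ae_of (A : set X) (g : X -> R) : DO A ->
  (forall x, A x -> g @ x --> g x) -> is_ae (A, g).
Proof.
move=> [oA dA] c; split => //=.
rewrite continuous_open_subspace // => x; rewrite in_setE; exact: c.
Qed.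

Lemma is_ae_ring : ae_ring_closed (@is_ae X R).
Proof.
split.
- apply: is_ae_of; first exact: DOT.
  by move=> x _; exact: cvg_cst.
- apply: is_ae_of; first exact: DOT.
  by move=> x _; exact: cvg_cst.
- move=> f g hf hg; apply: is_ae_of; first exact: DOI (is_ae_DO hf) (is_ae_DO hg).
  move=> x [xf xg]; exact: cvgD (cont_at hf xf) (cont_at hg xg).
- move=> f hf; apply: is_ae_of; first exact: (is_ae_DO hf).
  move=> x xf; exact: cvgN (cont_at hf xf).
- move=> f g hf hg; apply: is_ae_of; first exact: DOI (is_ae_DO hf) (is_ae_DO hg).
  move=> x [xf xg]; exact: cvgM (cont_at hf xf) (cont_at hg xg).
Qed.


Lemma good_of (S : aerep X R -> Prop) :
  (forall f, S f -> is_ae f) -> ae_ring_closed S -> ae_good S.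
Proof.
move=> hS hR.
have D f : S f -> DO f.1 by move=> Sf; exact: is_ae_DO (hS f Sf).
have sq : forall r, S r -> ae_pos (ae_mul r r).
  move=> r Sr; apply: (mkle (D r Sr)) => [x ?|x _ /=]; first by split=> //; split.
  by rewrite -expr2 sqr_ge0.
split.
- split.
  + exact: hR.
  + split.
    * move=> f Sf; apply: (mkeq (D f Sf)) => // x ?; by split.
    * move=> f g _ _ /eqDO [A [dA sA eA]]; apply: (mkeq dA).
        by move=> x /sA [? ?]; split.
      by move=> x /eA ->.
    * move=> f g h _ _ _ /eqDO [A [dA sA eA]] /eqDO [B [dB sB eB]].
      apply: (mkeq (DOI dA dB)).
        by move=> x [/sA [? ?] /sB [? ?]]; split.
      by move=> x [/eA -> /eB ->].
    * move=> f f' g g' _ _ _ _ /eqDO [A [dA sA eA]] /eqDO [B [dB sB eB]].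
      split; apply: (mkeq (DOI dA dB)).
      - by move=> x [/sA [? ?] /sB [? ?]]; split; split.
      - by move=> x [/eA /= -> /eB ->].
      - by move=> x [/sA [? ?] /sB [? ?]]; split; split.
      - by move=> x [/eA /= -> /eB ->].
    * move=> f f' _ _ /eqDO [A [dA sA eA]]; apply: (mkeq dA).
        by move=> x /sA [? ?]; split.
      by move=> x /eA /= ->.
  + split; split.
    * move=> f g h Sf Sg Sh; apply: (mkeq (DOI (DOI (D f Sf) (D g Sg)) (D h Sh))).
        by move=> x [[? ?] ?]; split; split=> //; split.
      by move=> x _ /=; rewrite addrA.
    * move=> f g Sf Sg; apply: (mkeq (DOI (D f Sf) (D g Sg))).
        by move=> x [? ?]; split; split.
      by move=> x _ /=; rewrite addrC.
    * move=> f Sf; apply: (mkeq (D f Sf)); first by move=> x ?; split=> //; split.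
      by move=> x _ /=; rewrite add0r.
    * move=> f Sf; apply: (mkeq (D f Sf)); first by move=> x ?; split=> //; split.
      by move=> x _ /=; rewrite addNr.
    * move=> f g h Sf Sg Sh; apply: (mkeq (DOI (DOI (D f Sf) (D g Sg)) (D h Sh))).
        by move=> x [[? ?] ?]; split; split=> //; split.
      by move=> x _ /=; rewrite mulrA.
    * move=> f g Sf Sg; apply: (mkeq (DOI (D f Sf) (D g Sg))).
        by move=> x [? ?]; split; split.
      by move=> x _ /=; rewrite mulrC.
    * move=> f Sf; apply: (mkeq (D f Sf)); first by move=> x ?; split=> //; split.
      by move=> x _ /=; rewrite mul1r.
    * move=> f g h Sf Sg Sh; apply: (mkeq (DOI (DOI (D f Sf) (D g Sg)) (D h Sh))).
        by move=> x [[? ?] ?]; split; split=> //; split.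
      by move=> x _ /=; rewrite mulrDr.
  + split.
    * move=> f f' g g' _ _ _ _ /eqDO [A [dA sA eA]] /eqDO [B [dB sB eB]]
        /leDO [C [dC sC lC]].
      apply: (mkle (DOI (DOI dA dB) dC)).
        by move=> x [[/sA [? ?] /sB [? ?]] _]; split.
      by move=> x [[/eA <- /eB <-] /lC].
    * move=> f Sf; apply: (mkle (D f Sf)); first by move=> x ?; split.
      by move=> x _; exact: lexx.
    * move=> f g h _ _ _ /leDO [A [dA sA lA]] /leDO [B [dB sB lB]].
      apply: (mkle (DOI dA dB)).
        by move=> x [/sA [? ?] /sB [? ?]]; split.
      by move=> x [/lA h1 /lB h2]; exact: le_trans h1 h2.
    * move=> f g _ _ /leDO [A [dA sA lA]] /leDO [B [dB sB lB]].
      apply: (mkeq (DOI dA dB)).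
        by move=> x [/sA [? ?] /sB [? ?]]; split.
      by move=> x [/lA h1 /lB h2]; apply/eqP; rewrite eq_le h1 h2.
  + split.
    * move=> r s t _ _ St /leDO [A [dA sA lA]].
      apply: (mkle (DOI dA (D t St))).
        by move=> x [/sA [? ?] ?]; split; split.
      by move=> x [/lA h _] /=; rewrite lerD2r.
    * move=> r s _ _ /leDO [A [dA sA lA]] /leDO [B [dB sB lB]].
      apply: (mkle (DOI dA dB)).
        by move=> x [/sA [? ?] /sB [? ?]]; split=> //; split.
      by move=> x [/lA h1 /lB h2] /=; exact: mulr_ge0.
    * exact: sq.
- move=> g h Sg Sh H.
  have dg := D g Sg; have dh := D h Sh.
  apply: (mkle (DOI dg dh)) => [x [? ?]|x [xg xh]]; first by split.
  rewrite /= leNgt; apply/negP => gx0.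
  set k := (Num.trunc ((h.2 x + 1) / (- g.2 x / 2))).+1.
  have hk : (h.2 x + 1) / (- g.2 x / 2) < k%:R by exact: truncnS_gt.
  have e0 : 0 < - g.2 x / 2 by rewrite divr_gt0 // oppr_gt0.
  have [A [dA sA lA]] := leDO (H k (ltn0Sn _)).
  have k0 : (0 < k)%N by [].
  clearbody k.
  have ltg : g.2 x < g.2 x + (- g.2 x / 2) by rewrite ltrDl.
  have ng := cvgr_lt _ (cont_at (hS g Sg) xg) _ ltg.
  have lth : h.2 x < h.2 x + 1 by rewrite ltrDl.
  have nh := cvgr_lt _ (cont_at (hS h Sh) xh) _ lth.
  have nD : nbhs x (g.1 `&` h.1).
    by apply: open_nbhs_nbhs; split; [exact: (DOI dg dh).1|split].
  have N : nbhs x ([set y | g.2 y < g.2 x + (- g.2 x / 2)] `&` ([set y | h.2 y < h.2 x + 1] `&` (g.1 `&` h.1))).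
    apply: filterI; first exact: ng.
    by apply: filterI; [exact: nh|exact: nD].
  move: N; rewrite nbhsE => -[U [oU Ux] sU].
  have [y [Uy Ay]] := dA.2 U (ex_intro _ x Ux) oU.
  have [/= gy [/= hy _]] := sU y Uy.
  have := lA y Ay; rewrite /= natmulE -mulr_natr => hpos.
  have K0 : 0 < (k%:R : R) by rewrite ltr0n.
  have hk' : h.2 x + 1 < k%:R * (- g.2 x / 2) by rewrite -ltr_pdivrMr.
  have gyK : g.2 y * k%:R < (g.2 x + - g.2 x / 2) * k%:R by rewrite ltr_pM2r.
  move: gy hy hpos hk' gyK; lra.
- split; first exact: sq.
  move=> s Ss; split; first by case.
  move=> cone; split=> // r Sr /leDO [C [dC sC lC]].
  case: cone => p [Sp /leDO [A [dA sA lA]] /eqDO [B [dB sB eB]]].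
  apply: (mkle (DOI (DOI dA dB) dC)).
    by move=> x [_ /sC [_ [? _]]]; split.
  move=> x [[/lA /= hp /eB /= hs] /lC /= hrs].
  rewrite hs in hrs.
  have p1 : 0 < 1 + p.2 x by lra.
  by rewrite -(pmulr_lge0 _ p1).
Qed.

End Proof15.

Theorem proposition15 (R : realType) (X : topologicalType)
  (hcomp : compact [set: X]) (hhaus : hausdorff_space X) :
  ae_good (@is_ae X R) /\
  (forall S : aerep X R -> Prop, ae_subring S -> ae_good S).
Proof.
split; first by apply: good_of => //; exact: is_ae_ring.
by move=> S [h1 _ h2]; exact: good_of.
Qed.
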